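(* Let $\mathcal{F}$ be the family of subsets $C\subset\mathbb{Z}^n$ that are bounded below, i.e. for which there exist $b_1,\dots,b_n\in\mathbb{Z}$ with $\alpha_i\ge b_i$ for all $\alpha\in C$ and all $i$. For $C\in\mathcal{F}$ define $m_C:\mathbb{Z}^n\to\mathbb{Z}$ by $m_C(\alpha)=\#\{i\in\{1,\dots,n\}\mid \alpha+e_i\in C\}$, i.e. $m_C=\sum_{i=1}^n\mathbb{1}_{C-e_i}$. Then the map $\mathcal{F}\to\{f:\mathbb{Z}^n\to\mathbb{Z}\}$, $C\mapsto m_C$, is injective.
   Context: $e_1,\dots,e_n$ denotes the standard basis of $\mathbb{Z}^n$ and $\mathbb{1}_X$ the indicator function of a set $X$. *)

(* Defs.v *)
From mathcomp Require Import all_boot all_order all_algebra.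
Set Implicit Arguments. Unset Strict Implicit. Unset Printing Implicit Defensive.
Import Order.TTheory GRing.Theory Num.Theory.
Local Open Scope ring_scope.

(* Points of Z^n are finite functions 'I_n -> int; subsets of Z^n are
   boolean predicates on them. *)
Definition pt (n : nat) := {ffun 'I_n -> int}.

Definition e_ (n : nat) (i : 'I_n) : pt n := [ffun j => ((i == j) : nat)%:Z].

Definition shift (n : nat) (alpha : pt n) (i : 'I_n) : pt n :=
  [ffun j => alpha j + e_ i j].

Definition bounded_below (n : nat) (C : pred (pt n)) : Prop :=
  exists b : pt n, forall alpha, C alpha -> forall i, b i <= alpha i.

Definition mC (n : nat) (C : pred (pt n)) : pt n -> int :=
  fun alpha => (#|[pred i : 'I_n | C (shift alpha i)]|)%:Z.

(* Main.v *)
Require Import Defs.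
From mathcomp Require Import all_boot all_order all_algebra.
From mathcomp Require Import zify.
From Stdlib Require Import FunctionalExtensionality.
Set Implicit Arguments. Unset Strict Implicit. Unset Printing Implicit Defensive.
Import Order.TTheory GRing.Theory Num.Theory.
Local Open Scope ring_scope.

Section S.
Variable n : nat.
Definition w (a : pt n.+1) : int := a ord0 + \sum_j a j.
Definition bet (a : pt n.+1) : pt n.+1 := [ffun j => a j - e_ ord0 j].

Lemma sum_e (i : 'I_n.+1) : \sum_j e_ i j = 1.
Proof.
rewrite (bigD1 i) //= big1 => [|j Hj]; rewrite /e_ ffunE ?eqxx ?addr0 //.
by rewrite eq_sym (negPf Hj).
Qed.

Lemma shift0 a : shift (bet a) ord0 = a.
Proof. by apply/ffunP => j; rewrite !ffunE subrK. Qed.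

Lemma wshift a i : i != ord0 -> w (shift (bet a) i) = w a - 1.
Proof.
move=> Hi; rewrite /w !ffunE.
have -> : \sum_(j < n.+1) shift (bet a) i j = \sum_(j < n.+1) a j - \sum_(j < n.+1) e_ ord0 j + \sum_(j < n.+1) e_ i j.
  rewrite -sumrB -big_split /=; apply: eq_bigr => j _; by rewrite !ffunE.
rewrite !sum_e /e_ ?ffunE eqxx (negPf Hi) /= addr0 subrK; by rewrite addrAC.
Qed.

Lemma wmono (a b : pt n.+1) : (forall i, b i <= a i) -> w b <= w a.
Proof. move=> H; rewrite /w lerD // ler_sum // => i _; exact: H. Qed.
End S.

Theorem proposition3p2 (n : nat) (hn : (0 < n)%N) (C1 C2 : pred (pt n)) :
  bounded_below C1 -> bounded_below C2 -> mC C1 = mC C2 -> C1 = C2.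
Proof.
case: n hn C1 C2 => // n _ C1 C2 [b1 Hb1] [b2 Hb2] hm.
set L := Order.min (w b1) (w b2).
have HL : forall a, C1 a != C2 a -> L <= w a.
  move=> a; case E1: (C1 a); case E2: (C2 a) => //= _.
  - by rewrite ge_min (wmono (Hb1 a E1)).
  - by rewrite ge_min (wmono (Hb2 a E2)) orbT.
suff H : forall k a, (absz (w a - L) < k)%N -> C1 a = C2 a.
  apply: functional_extensionality => a; exact: (H _ a (ltnSn _)).
elim=> // k IH a Hk.
case: (eqVneq (C1 a) (C2 a)) => // Hne.
have La := HL a Hne.
have Hi : forall i, i != ord0 -> C1 (shift (bet a) i) = C2 (shift (bet a) i).
  move=> i Hi0; case: (eqVneq (C1 (shift (bet a) i)) (C2 (shift (bet a) i))) => // Hne'.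
  have := HL _ Hne'; rewrite wshift // => Hl.
  apply: IH; rewrite wshift //.
  move: Hk Hl La; set x := w a; lia.
have := congr1 (fun f => f (bet a)) hm; rewrite /mC /= => /eqP; rewrite eqz_nat => /eqP.
rewrite (cardD1 ord0) [in RHS](cardD1 ord0) !inE shift0.
have -> : #|[predD1 [pred i | C1 (shift (bet a) i)] & ord0]| =
          #|[predD1 [pred i | C2 (shift (bet a) i)] & ord0]|.
  apply: eq_card => i; rewrite !inE; case: eqVneq => //= H0; by rewrite Hi.
move/addIn; move: Hne; by case: (C1 a); case: (C2 a).
Qed.
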